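(* Let $h=(v_0,v_1,\dots,v_{n+1})$ be a Hamiltonian cycle over $N$ for an FSTSP instance $(n,N,t_R,t_D)$, and let $0\le i<j<k\le n+1$ be such that the drone is fast in operation $o_{i,j,k}$ (with respect to $h$). Then there exists an optimal solution of the h-FSTSP for $h$ that contains no operation of the form $o_{i',j,k'}$ with $0\le i'\le i$, $k\le k'\le n+1$ and $(i',k')\neq(i,k)$. That is, all such operations can be ignored by an algorithm for the h-FSTSP without losing optimality.
   Context: An FSTSP instance consists of an integer $n>0$, the set of customers $C=\{1,\dots,n\}$, the node set $N=\{0,1,\dots,n+1\}$ where $0$ and $n+1$ both denote the depot, and nonnegative truck travel times $t_R(u,v)$ and drone travel times $t_D(u,v)$ for all pairs of nodes $u,v$. An operation is a pair $o=(r,d)$: $r=(v^r_1,\dots,v^r_{|r|})$, $|r|\ge 2$, is the truck path with time $t(r)=\sum_{\ell=1}^{|r|-1} t_R(v^r_\ell,v^r_{\ell+1})$; $d$ is either empty or $d=(v^r_1,v^d,v^r_{|r|})$ with $v^d\in C$ a drone node not on $r$, with time $t(d)=t_D(v^r_1,v^d)+t_D(v^d,v^r_{|r|})$. The time of the operation is $t(o)=\max\{t(r),t(d)\}$ if $d$ is nonempty and $t(o)=t(r)$ otherwise. A solution is a sequence $S=(o_1,\dots,o_m)$ of operations $o_\ell=(r_\ell,d_\ell)$ such that the first node of $r_1$ is the depot $0$, the last node of $r_m$ is the depot $n+1$, the depot appears in no other position, for each $\ell<m$ the last node of $r_\ell$ equals the first node of $r_{\ell+1}$, and every customer is served exactly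 once (as a truck node, shared endpoints of consecutive truck paths counting once, or as a drone node). Its time is $t(S)=\sum_\ell t(o_\ell)$. A Hamiltonian cycle over $N$ is a sequence $h=(v_0,\dots,v_{n+1})$ with $v_0=0$, $v_{n+1}=n+1$ and $(v_1,\dots,v_n)$ a permutation of $C$. A solution respects $h$ if the truck nodes, in order of visit, appear in the same relative order as in $h$ and every drone node lies strictly between its operation's launch and rendezvous nodes in $h$; the h-FSTSP asks for a minimum-time solution among those respecting $h$. For indices $i<j<k$, $o_{i,j,k}=(r,d)$ denotes the operation with truck path $r=(v_i,\dots,v_{j-1},v_{j+1},\dots,v_k)$ and drone path $d=(v_i,v_j,v_k)$. The drone is fast in $o_{i,j,k}$ if $t(d)\le t(r)$. *)

(* Defs.v *)
(* Nodes are natural numbers 0..n+1 (0 and n+1 = depot),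
   customers are 1..n. Travel times take values in an abstract real domain R. *)
From mathcomp Require Import all_boot all_order all_algebra.
Set Implicit Arguments. Unset Strict Implicit. Unset Printing Implicit Defensive.
Import Order.TTheory GRing.Theory Num.Theory.
Local Open Scope ring_scope.

(* An operation o = (r, d): r the truck path, d = Some v for drone node v
   (drone path (head r, v, last r)), d = None for an empty drone path. *)
Definition operation := (seq nat * option nat)%type.

Section FSTSP.
Variables (R : realDomainType) (n : nat) (tR tD : nat -> nat -> R).

Definition truck_time (r : seq nat) : R :=
  \sum_(p <- zip r (behead r)) tR p.1 p.2.

Definition drone_time (r : seq nat) (v : nat) : R :=
  tD (head 0%N r) v + tD v (last 0%N r).

Definition op_time (o : operation) : R :=
  match o.2 with
  | Some v => Num.max (truck_time o.1) (drone_time o.1 v)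
  | None => truck_time o.1
  end.

Definition sol_time (S : seq operation) : R := \sum_(o <- S) op_time o.

Definition is_customer (v : nat) : bool := (1 <= v <= n)%N.

Definition op_wf (o : operation) : bool :=
  [&& (2 <= size o.1)%N, all (fun v => v <= n.+1)%N o.1 &
      match o.2 with Some v => is_customer v && (v \notin o.1) | None => true end].

(* truck nodes in order of visit, shared endpoints counted once *)
Definition truck_nodes (S : seq operation) : seq nat :=
  match S with
  | [::] => [::]
  | o :: S' => o.1 ++ flatten [seq behead o'.1 | o' <- S']
  end.

Definition drone_nodes (S : seq operation) : seq nat := pmap snd S.

Fixpoint linked (S : seq operation) : bool :=
  match S with
  | o1 :: ((o2 :: _) as S') => (last 0%N o1.1 == head 0%N o2.1) && linked S'
  | _ => true
  end.

Definition is_solution (S : seq operation) : bool :=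
  [&& S != [::], all op_wf S, linked S,
      head 0%N (truck_nodes S) == 0%N,
      last 0%N (truck_nodes S) == n.+1,
      count_mem 0%N (truck_nodes S) == 1%N,
      count_mem n.+1 (truck_nodes S) == 1%N &
      all (fun c => count_mem c (truck_nodes S) + count_mem c (drone_nodes S) == 1)%N
          (iota 1 n)].

Definition hamiltonian (h : seq nat) : Prop :=
  [/\ size h = n.+2, nth 0%N h 0 = 0%N, nth 0%N h n.+1 = n.+1 &
      perm_eq (drop 1 (take n.+1 h)) (iota 1 n)].

Definition respects (h : seq nat) (S : seq operation) : bool :=
  subseq (truck_nodes S) h &&
  all (fun o => match o.2 with
                | Some v => (index (head 0%N o.1) h < index v h < index (last 0%N o.1) h)%N
                | None => true end) S.

Definition optimal_h (h : seq nat) (S : seq operation) : Prop :=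
  is_solution S /\ respects h S /\
  forall S', is_solution S' -> respects h S' -> sol_time S <= sol_time S'.

Definition op_ijk (h : seq nat) (i j k : nat) : operation :=
  ([seq nth 0%N h l | l <- iota i (k - i).+1 & l != j], Some (nth 0%N h j)).

Definition drone_fast (o : operation) : Prop :=
  match o.2 with Some v => drone_time o.1 v <= truck_time o.1 | None => False end.

End FSTSP.

(* Main.v *)
Require Import Defs.
From mathcomp Require Import all_boot all_order all_algebra.
From mathcomp Require Import zify.
From Stdlib Require Classical.
Set Implicit Arguments. Unset Strict Implicit. Unset Printing Implicit Defensive.
Import Order.TTheory GRing.Theory Num.Theory.
Local Open Scope ring_scope.

Fixpoint tups (T : Type) (m : nat) (A : seq T) : seq (seq T) :=
  if m is m'.+1 then [::] :: [seq x :: s | x <- A, s <- tups m' A] else [:: [::]].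

Lemma mem_tups (T : eqType) (m : nat) (A s : seq T) :
  (size s <= m)%N -> all (fun x => x \in A) s -> s \in tups m A.
Proof.
elim: m s => [|m IH] [|x s] //= Hs /andP[Hx Ha].
rewrite in_cons; apply/orP; right.
by apply: (allpairs_f (fun x s => x :: s)) => //; apply: IH.
Qed.

Lemma exists_min (R : realDomainType) (T : eqType) (f : T -> R) (P : pred T) (L : seq T) :
  has P L -> exists2 x, x \in L & P x /\ forall y, y \in L -> P y -> f x <= f y.
Proof.
elim: L => [|a L IH] //= Hh.
case: (boolP (has P L)) => HL.
  have [x xL [Px Hx]] := IH HL.
  case: (boolP (P a)) => Pa.
    case: (lerP (f a) (f x)) => Hax.
      exists a; first by rewrite inE eqxx.
      split=> // y; rewrite inE => /orP[/eqP->|yL] Py //.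
      exact: le_trans Hax (Hx y yL Py).
    exists x; first by rewrite inE xL orbT.
    split=> // y; rewrite inE => /orP[/eqP->|yL] Py; last exact: Hx.
    exact: ltW.
  exists x; first by rewrite inE xL orbT.
  split=> // y; rewrite inE => /orP[/eqP->|yL] Py; last exact: Hx.
  by rewrite Py in Pa.
have Pa : P a by move: Hh; rewrite (negbTE HL) orbF.
exists a; first by rewrite inE eqxx.
split=> // y; rewrite inE => /orP[/eqP->|yL] Py //.
by case/hasP: HL; exists y.
Qed.

Lemma size_flatten_ge (T : eqType) (U : Type) (g : T -> seq U) (s : seq T) x :
  x \in s -> (size (g x) <= size (flatten (map g s)))%N.
Proof.
elim: s => [|y s IH] //=; rewrite inE size_cat => /orP[/eqP->|/IH]; first exact: leq_addr.
by move=> H; apply: leq_trans H (leq_addl _ _).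
Qed.

Lemma size_flatten_cnt (T : eqType) (U : Type) (g : T -> seq U) (s : seq T) :
  (forall x, x \in s -> 0 < size (g x))%N -> (size s <= size (flatten (map g s)))%N.
Proof.
elim: s => [|y s IH] //= H; rewrite size_cat.
have := H y (mem_head _ _); have := IH (fun x xs => H x (mem_behead (s:=y::s) xs)); lia.
Qed.

Definition Fl (S : seq operation) := flatten [seq behead o'.1 | o' <- S].

Lemma tn_cons o S : truck_nodes (o :: S) = o.1 ++ Fl S.
Proof. by []. Qed.

Lemma Fl_cat S1 S2 : Fl (S1 ++ S2) = Fl S1 ++ Fl S2.
Proof. by rewrite /Fl map_cat flatten_cat. Qed.

Lemma Fl_cons o S : Fl (o :: S) = behead o.1 ++ Fl S.
Proof. by []. Qed.

Lemma tn_size_op S o : o \in S -> (size o.1 <= (size (truck_nodes S)).+1)%N.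
Proof.
case: S => [|x S] //; rewrite inE tn_cons size_cat => /orP[/eqP->|oS]; first by rewrite addnC -addSn leq_addl.
have := size_flatten_ge (fun o' : operation => behead o'.1) oS.
rewrite size_behead -/(Fl S). move=> H; apply: leq_trans (leqSpred _) _; rewrite ltnS; exact: leq_trans H (leq_addl _ _).
Qed.

Lemma tn_size_S n S : S != [::] -> all (op_wf n) S -> (size S <= size (truck_nodes S))%N.
Proof.
case: S => [|x S] // _ /andP[/andP[Hx _] HS]; rewrite tn_cons size_cat /=.
have : (size S <= size (Fl S))%N.
  apply: size_flatten_cnt => o oS; rewrite size_behead.
  by move/allP: HS => /(_ o oS) /andP[]; case: (size o.1) => [|[]].
move=> H; rewrite -add1n; apply: leq_add => //; exact: leq_trans Hx.
Qed.

Definition lrel (a b : operation) := last 0%N a.1 == head 0%N b.1.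

Lemma linked_sorted S : linked S = sorted lrel S.
Proof. elim: S => [|a S IH] //; case: S IH => [|b S] // IH. have -> : linked [:: a, b & S] = lrel a b && linked (b :: S) by []. by rewrite IH. Qed.


Lemma tn_replace pre o post n1 N' :
  truck_nodes (n1 :: N') = o.1 -> n1.1 != [::] ->
  truck_nodes (pre ++ (n1 :: N') ++ post) = truck_nodes (pre ++ o :: post).
Proof.
rewrite tn_cons => HN Hn1.
case: pre => [|p pre].
  by rewrite !cat0s cat_cons !tn_cons Fl_cat catA HN.
rewrite !cat_cons !tn_cons !Fl_cat !Fl_cons; congr (_ ++ (_ ++ _)).
rewrite Fl_cat catA -HN; by case: (n1.1) Hn1.
Qed.

Lemma path_lrel_eq a b s : last 0%N a.1 = last 0%N b.1 -> path lrel a s = path lrel b s.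
Proof. by case: s => [|c s] //= H; rewrite /lrel H. Qed.

Lemma linked_replace pre o post n1 N' :
  linked (pre ++ o :: post) -> linked (n1 :: N') ->
  head 0%N n1.1 = head 0%N o.1 -> last 0%N (last n1 N').1 = last 0%N o.1 ->
  linked (pre ++ (n1 :: N') ++ post).
Proof.
rewrite !linked_sorted => H1 H2 Hh Hl.
have Hmid : path lrel n1 (N' ++ post) = path lrel o post.
  rewrite cat_path; move: H2 => /= ->; exact: path_lrel_eq.
case: pre H1 => [|p pre] /=.
  by rewrite Hmid.
rewrite !cat_path => /andP[-> /=] /andP[Hr Hp]; rewrite Hmid Hp andbT.
by move: Hr; rewrite /lrel Hh.
Qed.

Definition rdc (h : seq nat) (o : operation) : bool :=
  match o.2 with
  | Some v => (index (head 0%N o.1) h < index v h < index (last 0%N o.1) h)%N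
  | None => true end.

Lemma replace_sol n h pre o post n1 N' :
  is_solution n (pre ++ o :: post) -> respects h (pre ++ o :: post) ->
  all (op_wf n) (n1 :: N') -> linked (n1 :: N') ->
  head 0%N n1.1 = head 0%N o.1 -> last 0%N (last n1 N').1 = last 0%N o.1 ->
  truck_nodes (n1 :: N') = o.1 -> n1.1 != [::] ->
  pmap snd (n1 :: N') = pmap snd [:: o] -> all (rdc h) (n1 :: N') ->
  is_solution n (pre ++ (n1 :: N') ++ post) /\ respects h (pre ++ (n1 :: N') ++ post).
Proof.
move=> Hs Hr Hwf Hl Hh Hla Htn Hne Hpm Hrdc.
have Etn := tn_replace pre post Htn Hne.
have Edn : drone_nodes (pre ++ (n1 :: N') ++ post) = drone_nodes (pre ++ o :: post).
  by rewrite /drone_nodes -(cat1s o post) !pmap_cat Hpm.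
move: Hs Hr; rewrite /is_solution /respects Etn Edn.
move=> /andP[_ /andP[Hwf0 /andP[Hl0 Hrest]]] /andP[Hsub Hall].
split.
  rewrite Hrest !andbT; apply/andP; split; first by case: (pre).
  apply/andP; split; last exact: linked_replace Hl0 Hl Hh Hla.
  move: Hwf0; rewrite !all_cat /= => /andP[-> /andP[_ ->]]; rewrite andbT.
  exact: Hwf.
apply/andP; split => //; move: Hall; rewrite !all_cat => /andP[Hp /andP[_ Hq]]. apply/andP; split => //; apply/andP; split => //.
Qed.

Lemma ham_decomp n h : hamiltonian n h ->
  exists m, h = 0%N :: m ++ [:: n.+1] /\ perm_eq m (iota 1 n).
Proof.
case=> Hs H0 Hn Hp.
case: h Hs H0 Hn Hp => [|x t] //= [Hs] H0 Hn; rewrite drop0 => Hp.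
exists (take n t); split => //; rewrite H0; congr (_ :: _).
rewrite -{1}(cat_take_drop n t) (drop_nth 0%N) ?Hs // drop_oversize ?Hs //.
by rewrite Hn.
Qed.

Lemma ham_facts n h : hamiltonian n h ->
  [/\ size h = n.+2, uniq h, forall v, v \in h -> (v <= n.+1)%N,
      forall l, (1 <= l <= n)%N -> is_customer n (nth 0%N h l)
    & forall v, (v <= n.+1)%N -> v \in h].
Proof.
move=> Hh; have [Hs _ _ _] := Hh.
have [m [-> Hp]] := ham_decomp Hh.
have Hm v : (v \in m) = (1 <= v <= n)%N by rewrite (perm_mem Hp) mem_iota; lia.
have Sm : size m = n by rewrite (perm_size Hp) size_iota.
split => //.
- by rewrite /= size_cat Sm addn1.
- rewrite cons_uniq cat_uniq (perm_uniq Hp) iota_uniq mem_cat Hm !inE /= Hm orbF andbT; lia.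
- by move=> v; rewrite inE mem_cat inE Hm => /or3P[/eqP->| |/eqP->] //; lia.
- move=> l Hl; rewrite /is_customer; case: l Hl => [|l] //= Hl.
  rewrite nth_cat Sm (_ : l < n)%N; last lia.
  by rewrite -Hm mem_nth // Sm; lia.
- move=> v Hv; rewrite inE mem_cat Hm inE.
  case: v Hv => [|v] Hv //=; case: (ltnP v n) => Hvn //.
  by rewrite /= eqSS; apply/eqP; lia.
Qed.

Lemma triv_sol n h : hamiltonian n h ->
  is_solution n [:: (h, None)] /\ respects h [:: (h, None)].
Proof.
move=> Hh; have [Hs Hu Hle Hc Hin] := ham_facts Hh.
have [_ H0 Hn _] := Hh.
have Etn : truck_nodes [:: (h, None)] = h by rewrite tn_cons cats0.
rewrite /is_solution /respects Etn /=.
split; last by rewrite subseq_refl.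
have Hh0 : head 0%N h = 0%N by case: (h) H0.
have Hhl : last 0%N h = n.+1 by rewrite -nth_last Hs.
rewrite Hh0 Hhl !eqxx !count_uniq_mem // Hin // Hin //= andbT.
apply/andP; split.
- rewrite /op_wf /= Hs andbT; by apply/allP => v /Hle.
- apply/allP => c; rewrite mem_iota => Hc'.
  by rewrite count_uniq_mem // Hin //; lia.
Qed.

Definition opsL n : seq operation :=
  [seq (r, d) | r <- tups (n.+3) (iota 0 n.+2), d <- None :: map Some (iota 0 n.+2)].
Definition solsL n := tups n.+2 (opsL n).

Lemma sol_in n h S : hamiltonian n h -> is_solution n S -> respects h S -> S \in solsL n.
Proof.
move=> Hh /andP[Hne /andP[Hwf _]] /andP[Hsub _].
have [Hs _ _ _ _] := ham_facts Hh.
have Htn : (size (truck_nodes S) <= n.+2)%N by rewrite -Hs size_subseq.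
apply: mem_tups; first exact: leq_trans (tn_size_S Hne Hwf) Htn.
apply/allP => -[r d] Ho.
have := allP Hwf _ Ho; rewrite /op_wf /= => /and3P[_ Hr Hd].
apply: (allpairs_f (fun r d => (r, d))).
  apply: mem_tups; first exact: leq_trans (tn_size_op Ho) _.
  apply/allP => v Hv; have := allP Hr v Hv; rewrite mem_iota; lia.
case: d Hd {Ho} => [v|] //.
rewrite /is_customer => /andP[Hv _]; rewrite inE; apply/orP; right; apply: map_f.
rewrite mem_iota; lia.
Qed.

Lemma tt_nil (R : realDomainType) (tR : nat -> nat -> R) : truck_time tR [::] = 0.
Proof. by rewrite /truck_time big_nil. Qed.

Lemma tt_cons (R : realDomainType) (tR : nat -> nat -> R) x s :
  truck_time tR (x :: s) = (if s is y :: _ then tR x y else 0) + truck_time tR s.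
Proof.
case: s => [|y s]; first by rewrite /truck_time /= big_nil addr0.
by rewrite /truck_time /= big_cons.
Qed.

Lemma tt_single (R : realDomainType) (tR : nat -> nat -> R) x : truck_time tR [:: x] = 0.
Proof. by rewrite tt_cons tt_nil addr0. Qed.

Lemma tt_cat (R : realDomainType) (tR : nat -> nat -> R) s x t :
  truck_time tR (s ++ x :: t) = truck_time tR (rcons s x) + truck_time tR (x :: t).
Proof.
elim: s => [|y s IH]; first by rewrite /= tt_single add0r.
rewrite cat_cons rcons_cons tt_cons [in RHS]tt_cons IH addrA; congr (_ + _ + _).
by case: s {IH}.
Qed.

Definition idx (j a b : nat) := [seq l <- iota a (b - a).+1 | l != j].

Lemma idx0 j a b : (a <= j <= b)%N -> idx j a b = iota a (j - a) ++ iota j.+1 (b - j).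
Proof.
move=> /andP[Haj Hjb]; rewrite /idx.
have -> : (b - a).+1 = ((j - a) + (b - j).+1)%N by lia.
rewrite iotaD filter_cat (_ : (a + (j - a) = j)%N); last lia.
rewrite /= eqxx /=; congr (_ ++ _); apply/all_filterP/allP => l; rewrite mem_iota => Hl;
  apply/eqP; lia.
Qed.

Lemma idx_split j a i k b : (a <= i)%N -> (i <= j <= k)%N -> (k <= b)%N ->
  idx j a b = iota a (i - a) ++ idx j i k ++ iota k.+1 (b - k).
Proof.
move=> Hai /andP[Hij Hjk] Hkb.
rewrite !idx0; try (apply/andP; split; lia).
rewrite (_ : (j - a) = (i - a) + (j - i))%N; last lia.
rewrite (_ : (b - j) = (k - j) + (b - k))%N; last lia.
rewrite !iotaD !catA (_ : (a + (i - a) = i)%N); last lia.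
by rewrite (_ : (j.+1 + (k - j) = k.+1)%N); last lia.
Qed.

Lemma idx_head j a b : (a < j)%N -> (a <= b)%N -> idx j a b = a :: [seq l <- iota a.+1 (b - a) | l != j].
Proof. by move=> Haj Hab; rewrite /idx /= (_ : (a != j)) //; rewrite neq_ltn Haj. Qed.

Lemma idx_last j a b : (j < b)%N -> (a <= b)%N -> idx j a b = rcons [seq l <- iota a (b - a) | l != j] b.
Proof.
move=> Hjb Hab; rewrite /idx -addn1 iotaD filter_cat /= (_ : (a + (b - a) = b)%N); last lia.
by rewrite (_ : (b != j)) ?cats1 //; rewrite neq_ltn Hjb orbT.
Qed.

Lemma idx_size j a b : (a <= j <= b)%N -> size (idx j a b) = (b - a)%N.
Proof. move=> H; rewrite idx0 // size_cat !size_iota; lia. Qed.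

Lemma idx_mem j a b l : (a <= b)%N -> l \in idx j a b -> (a <= l <= b)%N /\ l != j.
Proof. move=> Hab; rewrite /idx mem_filter mem_iota => /andP[Hj H]; split => //; lia. Qed.

Lemma op1 h a j b : (op_ijk h a j b).1 = map (nth 0%N h) (idx j a b).
Proof. by []. Qed.

Lemma H_le n h l : hamiltonian n h -> (nth 0%N h l <= n.+1)%N.
Proof.
move=> Hh; have [Hs _ Hle _ _] := ham_facts Hh.
case: (ltnP l (size h)) => Hl; first by apply: Hle; rewrite mem_nth.
by rewrite nth_default.
Qed.

Lemma H_inj n h a b : hamiltonian n h -> (a <= n.+1)%N -> (b <= n.+1)%N ->
  nth 0%N h a = nth 0%N h b -> a = b.
Proof.
move=> Hh Ha Hb E; have [Hs Hu _ _ _] := ham_facts Hh.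
by apply/eqP; rewrite -(nth_uniq 0%N _ _ Hu) ?Hs ?E.
Qed.

Lemma H_index n h a : hamiltonian n h -> (a <= n.+1)%N -> index (nth 0%N h a) h = a.
Proof.
move=> Hh Ha; have [Hs Hu _ _ _] := ham_facts Hh.
by rewrite index_uniq ?Hs.
Qed.

Lemma all_le_H n h s : hamiltonian n h -> all (fun v => v <= n.+1)%N (map (nth 0%N h) s).
Proof. by move=> Hh; apply/allP => v /mapP[l _ ->]; exact: H_le. Qed.

Lemma replace_sol' n h pre o post N :
  is_solution n (pre ++ o :: post) -> respects h (pre ++ o :: post) ->
  N != [::] ->
  all (op_wf n) N -> linked N ->
  head 0%N (head o N).1 = head 0%N o.1 -> last 0%N (last o N).1 = last 0%N o.1 ->
  truck_nodes N = o.1 -> (head o N).1 != [::] ->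
  pmap snd N = pmap snd [:: o] -> all (rdc h) N ->
  is_solution n (pre ++ N ++ post) /\ respects h (pre ++ N ++ post).
Proof. case: N => [|n1 N'] // Hs Hr _; exact: replace_sol Hs Hr. Qed.

Lemma iota_rcons m x : iota m x.+1 = rcons (iota m x) (m + x)%N.
Proof. by rewrite -addn1 iotaD /= cats1. Qed.

Lemma opij_head h a j b : (a < j)%N -> (a <= b)%N ->
  head 0%N (op_ijk h a j b).1 = nth 0%N h a.
Proof. by move=> H1 H2; rewrite op1 idx_head. Qed.

Lemma opij_last h a j b : (j < b)%N -> (a <= b)%N ->
  last 0%N (op_ijk h a j b).1 = nth 0%N h b.
Proof. by move=> H1 H2; rewrite op1 idx_last // map_rcons last_rcons. Qed.

Lemma drone_once n pre x post v : is_solution n (pre ++ x :: post) -> x.2 = Some v ->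
  is_customer n v -> forall y, y \in pre ++ post -> y.2 != Some v.
Proof.
move=> /andP[_ /andP[_ /andP[_ /andP[_ /andP[_ /andP[_ /andP[_ Hall]]]]]]] Hx Hv y Hy.
have := allP Hall v; rewrite mem_iota => /(_ _)/eqP H.
have {H} H : (count_mem v (drone_nodes (pre ++ x :: post)) <= 1)%N.
  rewrite -H; last (move: Hv; rewrite /is_customer; lia); exact: leq_addl.
move: H; rewrite /drone_nodes -cat1s !pmap_cat !count_cat /= Hx /= eqxx.
apply: contraTneq => Hyv.
have : (0 < count_mem v (pmap snd pre) + count_mem v (pmap snd post))%N.
  rewrite addn_gt0 -!has_count !has_pred1 !mem_pmap.
  by rewrite -Hyv; move: Hy; rewrite mem_cat => /orP[] H; rewrite (map_f snd H) ?orbT.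
rewrite /nat_of_bool. move: (count_mem v (pmap snd pre)) (count_mem v (pmap snd post)) => a b. rewrite -ltnNge; lia.
Qed.

Ltac nlia :=
  repeat match goal with
  | H : ?T |- _ =>
    lazymatch T with
    | is_true (leq _ _) => fail
    | is_true (_ && _) => fail
    | @eq nat _ _ => fail
    | (_ <> _) => fail
    | _ => clear H
    end
  end; lia.

Theorem mainTheorem4 (R : realDomainType) (n : nat) (tR tD : nat -> nat -> R)
  (h : seq nat) (i j k : nat) :
  (0 < n)%N ->
  (forall u v, (u <= n.+1)%N -> (v <= n.+1)%N -> 0 <= tR u v /\ 0 <= tD u v) ->
  hamiltonian n h ->
  (i < j)%N -> (j < k)%N -> (k <= n.+1)%N ->
  drone_fast tR tD (op_ijk h i j k) ->
  exists S : seq operation,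
    optimal_h n tR tD h S /\
    (forall i' k', (i' <= i)%N -> (k <= k')%N -> (k' <= n.+1)%N ->
       (i', k') <> (i, k) -> op_ijk h i' j k' \notin S).
Proof.
move=> Hn0 Hpos Hh Hij Hjk Hkn Hfast.
have [Hs Hu Hle Hc Hin] := ham_facts Hh.
have Htriv := triv_sol Hh.
have Hhas : has (fun S => is_solution n S && respects h S) (solsL n).
  apply/hasP; exists [:: (h, None)]; first by case: Htriv => H1 H2; exact: sol_in Hh H1 H2.
  by case: Htriv => -> ->.
have [S0 _ [/andP[Hsol0 Hres0] Hmin]] := exists_min (sol_time tR tD) Hhas.
have Hopt : forall S', is_solution n S' -> respects h S' -> sol_time tR tD S0 <= sol_time tR tD S'.
  by move=> S' H1 H2; apply: Hmin; [exact: sol_in Hh H1 H2 | rewrite H1 H2].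
case: (Classical_Prop.classic (exists i' k', [/\ (i' <= i)%N, (k <= k')%N, (k' <= n.+1)%N,
   (i', k') <> (i, k) & op_ijk h i' j k' \in S0])); last first.
  move=> Hno; exists S0; split; first by split => //; split.
  move=> i' k' H1 H2 H3 H4; apply/negP => H5; apply: Hno; by exists i', k'.
move=> [i' [k' [Hi' Hk' Hk'n Hne Hin0]]].
clear Hmin.
have Hj1 : (1 <= j <= n)%N by apply/andP; split; nlia.
have HjC := Hc j Hj1.
have [B1 EB1] : {B1 | B1 = map (nth 0%N h) (idx j i k)} by exists (map (nth 0%N h) (idx j i k)).
have [Pl EPl] : {Pl | Pl = map (nth 0%N h) (iota i' (i - i'))} by exists (map (nth 0%N h) (iota i' (i - i'))).
have [Ql EQl] : {Ql | Ql = map (nth 0%N h) (iota k.+1 (k' - k))} by exists (map (nth 0%N h) (iota k.+1 (k' - k))).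
have EopB : op_ijk h i j k = (B1, Some (nth 0%N h j)) by rewrite EB1.
have Eopo : op_ijk h i' j k' = (Pl ++ B1 ++ Ql, Some (nth 0%N h j)).
  have -> : op_ijk h i' j k' = (map (nth 0%N h) (idx j i' k'), Some (nth 0%N h j)) by [].
  by rewrite (idx_split (i:=i) (k:=k)) ?map_cat ?EB1 ?EPl ?EQl //; apply/andP; split; nlia.
have hoh : head 0%N (Pl ++ B1 ++ Ql) = nth 0%N h i'.
  by rewrite -[Pl ++ _]/((Pl ++ B1 ++ Ql, Some (nth 0%N h j)).1) -Eopo opij_head //; nlia.
have hol : last 0%N (Pl ++ B1 ++ Ql) = nth 0%N h k'.
  by rewrite -[Pl ++ _]/((Pl ++ B1 ++ Ql, Some (nth 0%N h j)).1) -Eopo opij_last //; nlia.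
have [M1 hBh] : exists M1, B1 = nth 0%N h i :: M1.
  by exists (map (nth 0%N h) [seq l <- iota i.+1 (k - i) | l != j]); rewrite EB1 idx_head //; nlia.
have [M2 hBl] : exists M2, B1 = rcons M2 (nth 0%N h k).
  by exists (map (nth 0%N h) [seq l <- iota i (k - i) | l != j]); rewrite EB1 idx_last ?map_rcons //; nlia.
have hBhead : head 0%N B1 = nth 0%N h i by rewrite hBh.
have hBlast : last 0%N B1 = nth 0%N h k by rewrite hBl last_rcons.
have hBsz : size B1 = (k - i)%N by rewrite EB1 size_map idx_size //; apply/andP; split; nlia.
have hBj : nth 0%N h j \notin B1.
  rewrite EB1; apply/mapP => -[l Hl E].
  have [Hl1 Hl2] := idx_mem (ltnW (ltn_trans Hij Hjk)) Hl.
  have Ejl : j = l by apply: H_inj Hh _ _ E; nlia.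
  by rewrite Ejl eqxx in Hl2.
have hBle : all (fun v => v <= n.+1)%N B1 by rewrite EB1; exact: all_le_H.
have hPle : all (fun v => v <= n.+1)%N Pl by rewrite EPl; exact: all_le_H.
have hQle : all (fun v => v <= n.+1)%N Ql by rewrite EQl; exact: all_le_H.
have hPsz : size Pl = (i - i')%N by rewrite EPl size_map size_iota.
have hQsz : size Ql = (k' - k)%N by rewrite EQl size_map size_iota.
have hPh : (i' < i)%N -> head 0%N (rcons Pl (nth 0%N h i)) = nth 0%N h i'.
  by move=> Hi; rewrite EPl (_ : (i - i' = (i - i' - 1).+1)%N) //; nlia.
have hQl : (k < k')%N -> last 0%N (nth 0%N h k :: Ql) = nth 0%N h k'.
  move=> Hk; rewrite EQl -[_ :: map _ _]/(map (nth 0%N h) (iota k (k' - k).+1)).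
  by rewrite iota_rcons map_rcons last_rcons; congr nth; nlia.
have hwfB : op_wf n (B1, Some (nth 0%N h j)).
  apply/and3P; split => //; first by rewrite hBsz; nlia. by rewrite HjC hBj.
have hrdcB : rdc h (B1, Some (nth 0%N h j)).
  by rewrite /rdc /= hBhead hBlast !(H_index Hh) //; try nlia; apply/andP; split.
have hopB : op_time tR tD (B1, Some (nth 0%N h j)) = truck_time tR B1.
  by rewrite /op_time /= max_l //; move: Hfast; rewrite /drone_fast EopB.
have htt : truck_time tR (Pl ++ B1 ++ Ql) =
    truck_time tR (rcons Pl (nth 0%N h i)) + truck_time tR B1 +
    truck_time tR (nth 0%N h k :: Ql).
  by rewrite {1}hBh tt_cat -cat_cons -hBh {1}hBl cat_rcons tt_cat -hBl addrA.
have hopo : truck_time tR (Pl ++ B1 ++ Ql) <= op_time tR tD (Pl ++ B1 ++ Ql, Some (nth 0%N h j)).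
  by rewrite /op_time /= le_max lexx.
rewrite Eopo in Hin0.
move: Hsol0 Hres0 Hopt; case/splitPr: Hin0 => pre post Hsol0 Hres0 Hopt.
set B : operation := (B1, Some (nth 0%N h j)).
set o : operation := (Pl ++ B1 ++ Ql, Some (nth 0%N h j)).
have Hfin : forall Aopt Copt : seq operation,
    is_solution n (pre ++ (Aopt ++ B :: Copt) ++ post) ->
    respects h (pre ++ (Aopt ++ B :: Copt) ++ post) ->
    \sum_(x <- Aopt ++ B :: Copt) op_time tR tD x <= op_time tR tD o ->
    exists S : seq operation,
    optimal_h n tR tD h S /\
    (forall i' k', (i' <= i)%N -> (k <= k')%N -> (k' <= n.+1)%N ->
       (i', k') <> (i, k) -> op_ijk h i' j k' \notin S).
  move=> Aopt Copt Hsol1 Hres1 Htime.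
  exists (pre ++ (Aopt ++ B :: Copt) ++ post); split.
    split => //; split => // S' H1 H2; apply: le_trans (Hopt S' H1 H2).
    move: Htime; rewrite /sol_time !big_cat !big_cons /= => Ht. rewrite lerD2l lerD2r. exact: Ht.
  move=> i'' k'' H1 H2 H3 H4; apply/negP => Hm.
  have E : pre ++ (Aopt ++ B :: Copt) ++ post = (pre ++ Aopt) ++ B :: (Copt ++ post).
    by rewrite -!catA.
  rewrite E in Hsol1 Hm.
  have Hd := drone_once Hsol1 (erefl _) HjC.
  move: Hm; rewrite mem_cat inE orbCA => /orP[/eqP EB | Hm]; last first.
    by move: (Hd (op_ijk h i'' j k'')); rewrite mem_cat Hm /= eqxx => /(_ isT).
  have Hh1 : head 0%N (op_ijk h i'' j k'').1 = nth 0%N h i'' by rewrite opij_head //; nlia.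
  have Hl1 : last 0%N (op_ijk h i'' j k'').1 = nth 0%N h k'' by rewrite opij_last //; nlia.
  rewrite EB /= hBhead hBlast in Hh1 Hl1.
  have Ei : i = i'' by apply: H_inj Hh _ _ Hh1; nlia.
  have Ek : k = k'' by apply: H_inj Hh _ _ Hl1; nlia.
  by apply: H4; rewrite Ei Ek.
have hwfA : (i' < i)%N -> op_wf n (rcons Pl (nth 0%N h i), None).
  move=> Hi; apply/and3P; split => //; first by rewrite size_rcons hPsz; nlia.
  by rewrite all_rcons hPle (H_le _ Hh).
have hwfC : (k < k')%N -> op_wf n (nth 0%N h k :: Ql, None).
  move=> Hk; apply/and3P; split => //; first by rewrite /= hQsz; nlia.
  by rewrite /= hQle (H_le _ Hh).
have hsum : forall (Aopt Copt : seq operation),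
   \sum_(x <- Aopt ++ B :: Copt) op_time tR tD x =
   truck_time tR (rcons Pl (nth 0%N h i)) + truck_time tR B1 + truck_time tR (nth 0%N h k :: Ql) ->
   \sum_(x <- Aopt ++ B :: Copt) op_time tR tD x <= op_time tR tD o.
  by move=> Aopt Copt ->; rewrite -htt.
case: (ltnP i' i) => Hi; case: (ltnP k k') => Hk.
- set A : operation := (rcons Pl (nth 0%N h i), None).
  set C : operation := (nth 0%N h k :: Ql, None).
  have [Hs1 Hr1] : is_solution n (pre ++ ([:: A] ++ B :: [:: C]) ++ post) /\
                   respects h (pre ++ ([:: A] ++ B :: [:: C]) ++ post).
    apply: replace_sol' Hsol0 Hres0 _ _ _ _ _ _ _ _ _ => //; rewrite /A /B /C /=.
    + by rewrite hwfA // hwfB hwfC.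
    + by rewrite last_rcons hBhead hBlast !eqxx.
    + by rewrite hoh hPh.
    + by rewrite hol -(hQl Hk).
    + by rewrite hBh /= cats0 cat_rcons.
    + by case: (Pl).
    + by rewrite hrdcB.
  apply: (Hfin _ _ Hs1 Hr1); apply: hsum.
  by rewrite big_cat /= !big_cons big_nil /= hopB /op_time /= !addr0 addrA.
- have Ek : k' = k by nlia.
  subst k'.
  have EQ0 : Ql = [::] by apply/nilP; rewrite /nilp hQsz subnn.
  set A : operation := (rcons Pl (nth 0%N h i), None).
  have [Hs1 Hr1] : is_solution n (pre ++ ([:: A] ++ B :: [::]) ++ post) /\
                   respects h (pre ++ ([:: A] ++ B :: [::]) ++ post).
    apply: replace_sol' Hsol0 Hres0 _ _ _ _ _ _ _ _ _ => //; rewrite /A /B /=.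
    + by rewrite hwfA // hwfB.
    + by rewrite last_rcons hBhead !eqxx.
    + by rewrite hoh hPh.
    + by rewrite hol hBlast.
    + by rewrite EQ0 hBh /= !cats0 cat_rcons.
    + by case: (Pl).
    + by rewrite hrdcB.
  apply: (Hfin _ _ Hs1 Hr1); apply: hsum.
  by rewrite big_cat /= !big_cons big_nil /= hopB /op_time /= !addr0 EQ0 tt_single addr0.
- have Ei : i' = i by nlia.
  subst i'.
  have EP0 : Pl = [::] by apply/nilP; rewrite /nilp hPsz subnn.
  set C : operation := (nth 0%N h k :: Ql, None).
  have [Hs1 Hr1] : is_solution n (pre ++ ([::] ++ B :: [:: C]) ++ post) /\
                   respects h (pre ++ ([::] ++ B :: [:: C]) ++ post).
    apply: replace_sol' Hsol0 Hres0 _ _ _ _ _ _ _ _ _ => //; rewrite /C /B /=.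
    + by rewrite hwfB hwfC.
    + by rewrite hBlast !eqxx.
    + by rewrite hoh hBhead.
    + by rewrite hol -(hQl Hk).
    + by rewrite EP0 /= cats0.
    + by rewrite hBh.
    + by rewrite hrdcB.
  apply: (Hfin _ _ Hs1 Hr1); apply: hsum.
  by rewrite big_cat /= !big_cons big_nil /= hopB /op_time /= !addr0 EP0 tt_single add0r ?add0r.
- have Ei : i' = i by nlia.
  have Ek : k' = k by nlia.
  subst i' k'.
  by case: Hne.
Qed.
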